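(* Let $\mathcal{Z}=\{(S_q,\gamma_q)\}_{q\in[Q]}$ be a buyer-optimal signaling scheme for $\mathcal{D}$, and let $p$ be a price maximizing $p\cdot G_{\mathcal{D}}(p)$. Then for every $q$ with $\gamma_q>0$, the price $p$ also maximizes $p'\cdot G_{S_q}(p')$ over $p'\ge 0$.
   Context: Values and prior. $0<v_1<\dots<v_n$ are reals, and $\mathcal{D}$ is a distribution on $\{v_1,\dots,v_n\}$ with $f_{\mathcal{D}}(v_i)>0$. For a distribution $S$, $G_S(p)=\Pr_{v\sim S}[v\ge p]$. Signals and pricing. A signal is a distribution $S$ on these values. The seller posts $p^*_S$, the smallest $v$ in the support of $S$ maximizing $v\,G_S(v)$. The surplus of value $v$ is $cs_v(S)=\mathbb{1}[v\ge p^*_S](v-p^*_S)$. Signaling schemes. A signaling scheme is $\mathcal{Z}=\{(S_q,\gamma_q)\}$ with $\gamma_q\ge0$, $\sum\gamma_q=1$ and $\sum_q\gamma_q f_{S_q}=f_{\mathcal{D}}$. Its expected consumer surplus at $v_i$ is $cs_{v_i}(\mathcal{Z})=\sum_q cs_{v_i}(S_q)\gamma_q f_{S_q}(v_i)/f_{\mathcal{D}}(v_i)$. $\mathcal{Z}$ is buyer-optimal if \[\sum_i f_{\mathcal{D}}(v_i)\,cs_{v_i}(\mathcal{Z})=\sum_i f_{\mathcal{D}}(v_i)\,v_i-\max_p p\,G_{\mathcal{D}}(p).\] *)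

(* Defs.v *)
From mathcomp Require Import all_boot all_order all_algebra.
Set Implicit Arguments. Unset Strict Implicit. Unset Printing Implicit Defensive.
Import Order.TTheory GRing.Theory Num.Theory.
Local Open Scope ring_scope.

Section Defs.
Variables (R : realFieldType) (n : nat) (v : 'I_n -> R).

Definition valid_values : Prop :=
  (forall i, 0 < v i) /\ (forall i j : 'I_n, (i < j)%N -> v i < v j).

(* a (probability) distribution on {v_1,...,v_n}, given by its pmf f_S(v_i) = S i *)
Definition is_dist (S : 'I_n -> R) : Prop :=
  (forall i, 0 <= S i) /\ \sum_i S i = 1.

Definition G (S : 'I_n -> R) (p : R) : R := \sum_(i | p <= v i) S i.

Definition opt_price (S : 'I_n -> R) (p : R) : Prop :=
  0 <= p /\ forall p', 0 <= p' -> p' * G S p' <= p * G S p.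

Definition supp_maxrev (S : 'I_n -> R) : R :=
  \big[Num.max/0]_(j | 0 < S j) (v j * G S (v j)).

(* p*_S : the smallest v in the support of S maximizing v G_S(v).
   (The default value max_j v_j only matters if there is no candidate,
   which never happens for a distribution.) *)
Definition max_value : R := \big[Num.max/0]_j v j.

Definition seller_price (S : 'I_n -> R) : R :=
  \big[Num.min/max_value]_(j | (0 < S j) && (v j * G S (v j) == supp_maxrev S)) v j.

Definition cs (S : 'I_n -> R) (x : R) : R :=
  if seller_price S <= x then x - seller_price S else 0.

Definition is_scheme (Q : nat) (D : 'I_n -> R) (S : 'I_Q -> 'I_n -> R)
  (gamma : 'I_Q -> R) : Prop :=
  (forall q, 0 <= gamma q) /\ \sum_q gamma q = 1 /\
  (forall q, is_dist (S q)) /\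
  (forall i, \sum_q gamma q * S q i = D i).

Definition cs_scheme (Q : nat) (D : 'I_n -> R) (S : 'I_Q -> 'I_n -> R)
  (gamma : 'I_Q -> R) (i : 'I_n) : R :=
  \sum_q cs (S q) (v i) * gamma q * S q i / D i.

Definition buyer_optimal (Q : nat) (D : 'I_n -> R) (S : 'I_Q -> 'I_n -> R)
  (gamma : 'I_Q -> R) : Prop :=
  exists p0, opt_price D p0 /\
    \sum_i D i * cs_scheme D S gamma i = \sum_i D i * v i - p0 * G D p0.

End Defs.

(* Main.v *)
Require Import Defs.
From mathcomp Require Import all_boot all_order all_algebra.
Import Order.TTheory GRing.Theory Num.Theory.
Local Open Scope ring_scope.
Set Implicit Arguments. Unset Strict Implicit.

Section Helpers.
Variables (R : realFieldType) (I : finType).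

Lemma bmax_ub (P : pred I) (F : I -> R) x0 j : P j ->
  F j <= \big[Num.max/x0]_(i | P i) F i.
Proof. by move=> Pj; rewrite (bigD1 j) //= le_max lexx. Qed.


Lemma bmax_ge (P : pred I) (F : I -> R) x0 :
  x0 <= \big[Num.max/x0]_(i | P i) F i.
Proof.
elim/big_rec: _ => [|i x _ hx]; first exact: lexx.
by rewrite le_max hx orbT.
Qed.

Lemma bmax_cases (P : pred I) (F : I -> R) x0 :
  \big[Num.max/x0]_(i | P i) F i = x0 \/
  exists2 j, P j & \big[Num.max/x0]_(i | P i) F i = F j.
Proof.
elim/big_rec: _ => [|i x Pi hx]; first by left.
case: (leP x (F i)) => h; last by [].
by right; exists i.
Qed.

Lemma bmin_lb (P : pred I) (F : I -> R) x0 j : P j ->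
  \big[Num.min/x0]_(i | P i) F i <= F j.
Proof. by move=> Pj; rewrite (bigD1 j) //= ge_min lexx. Qed.

Lemma bmin_cases (P : pred I) (F : I -> R) x0 :
  \big[Num.min/x0]_(i | P i) F i = x0 \/
  exists2 j, P j & \big[Num.min/x0]_(i | P i) F i = F j.
Proof.
elim/big_rec: _ => [|i x Pi hx]; first by left.
case: (leP x (F i)) => h; first by [].
by right; exists i.
Qed.

Lemma bmin_attained (P : pred I) (F : I -> R) x0 :
  (exists i, P i) -> (forall i, F i <= x0) ->
  exists2 j, P j & \big[Num.min/x0]_(i | P i) F i = F j.
Proof.
move=> [i Pi] hF; case: (bmin_cases P F x0) => // h.
exists i => //; apply/eqP; rewrite eq_le bmin_lb // h hF //.
Qed.
End Helpers.
From mathcomp Require Import ring lra.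

Section Seller.
Variables (R : realFieldType) (n : nat) (v : 'I_n -> R) (S : 'I_n -> R).

Lemma G_ge0 x : (forall i, 0 <= S i) -> 0 <= G v S x.
Proof. by move=> h; apply: sumr_ge0 => i _. Qed.

Lemma seller_opt : valid_values v -> is_dist S -> forall p', 0 <= p' ->
  p' * G v S p' <= seller_price v S * G v S (seller_price v S).
Proof.
move=> [vpos vinc] [S0 S1] p' hp'.
have Gj : forall j, S j <= G v S (v j).
  move=> j; rewrite /G (bigD1 j) //= lerDl; apply: sumr_ge0 => i _; exact: S0.
have supp_ub : forall j, 0 < S j -> v j * G v S (v j) <= supp_maxrev v S.
  by move=> j hj; rewrite /supp_maxrev (bigD1 j) //= le_max lexx.
have [j0 hj0] : exists j, 0 < S j.
  case: (pickP (fun j => 0 < S j)) => [j hj|h]; first by exists j.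
  have : \sum_i S i = 0.
    by apply: big1 => i _; apply/eqP; rewrite eq_le S0 andbT leNgt h.
  by rewrite S1 => /eqP; rewrite oner_eq0.
have Fpos : forall j, 0 < S j -> 0 < v j * G v S (v j).
  by move=> j hj; apply: mulr_gt0 => //; apply: lt_le_trans (Gj j).
have [k hk Ek] : exists2 k, 0 < S k & supp_maxrev v S = v k * G v S (v k).
  case: (bmax_cases (fun j => 0 < S j) (fun j => v j * G v S (v j)) 0) => h.
    have := supp_ub j0 hj0; rewrite /supp_maxrev h => h'.
    by have := lt_le_trans (Fpos j0 hj0) h'; rewrite ltxx.
  exact: h.
have maxv : forall j, v j <= max_value v.
  by move=> j; rewrite /max_value (bigD1 j) //= le_max lexx.
have [c /andP [hc1 /eqP hc2] Ec] :=
  @bmin_attained _ _ (fun j => (0 < S j) && (v j * G v S (v j) == supp_maxrev v S))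
    v (max_value v) (ex_intro _ k (introT andP (conj hk (introT eqP (esym Ek))))) maxv.
rewrite /seller_price Ec hc2.
case: (pickP (fun j => (0 < S j) && (p' <= v j))) => [j hj|h].
  have [j1 /andP [hj1 hj1'] Ej1] := @bmin_attained _ _ (fun j => (0 < S j) && (p' <= v j)) v (max_value v) (ex_intro _ j hj) maxv.
  apply: le_trans (supp_ub j1 hj1).
  apply: ler_pM => //; first exact: G_ge0.
  rewrite /G (big_mkcond (fun i => p' <= v i)) [X in _ <= X]big_mkcond /=.
  apply: ler_sum => i _.
  case: ifP => hi; case: ifP => hi' //.
    have : S i <= 0.
      rewrite leNgt; apply/negP => Si.
      have := @bmin_lb _ _ (fun j => (0 < S j) && (p' <= v j)) v (max_value v) _ (introT andP (conj Si hi)).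
      by rewrite Ej1 hi'.
    by [].
have -> : G v S p' = 0.
  apply: big1 => i hi; apply/eqP; rewrite eq_le S0 andbT leNgt.
  by have := h i; rewrite hi andbT => ->.
by rewrite mulr0; apply: bmax_ge.
Qed.
End Seller.

Theorem lemma8 (R : realFieldType) (n : nat) (v : 'I_n -> R) (D : 'I_n -> R)
  (Q : nat) (S : 'I_Q -> 'I_n -> R) (gamma : 'I_Q -> R) (p : R) :
  valid_values v ->
  is_dist D -> (forall i, 0 < D i) ->
  is_scheme D S gamma ->
  buyer_optimal v D S gamma ->
  opt_price v D p ->
  forall q, 0 < gamma q -> opt_price v (S q) p.
Proof.
move=> hv hD hDpos [hg [hgs [hS hmix]]] [p0 [hp0 hbo]] hp q hq.
pose M q := seller_price v (S q) * G v (S q) (seller_price v (S q)).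
pose CS q := \sum_i S q i * cs v (S q) (v i).
have Mopt : forall q p', 0 <= p' -> p' * G v (S q) p' <= M q.
  by move=> q' p' hp'; apply: seller_opt.
have vpos := hv.1.
have CSle : forall q, CS q + M q <= \sum_i S q i * v i.
  move=> q'; rewrite /CS /M /G mulr_sumr.
  rewrite [X in _ + X]big_mkcond -big_split /=.
  apply: ler_sum => i _; rewrite /cs; case: ifP => h.
    by rewrite le_eqVlt; apply/orP; left; apply/eqP; ring.
  by rewrite mulr0 add0r; apply: mulr_ge0; [exact: (hS q').1 | exact: ltW].
have E1 : \sum_i D i * cs_scheme v D S gamma i = \sum_q gamma q * CS q.
  rewrite /cs_scheme /CS.
  under eq_bigr do rewrite mulr_sumr.
  rewrite exchange_big; apply: eq_bigr => q' _; rewrite mulr_sumr.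
  apply: eq_bigr => i _.
  have := hDpos i; rewrite lt0r => /andP [hDi _].
  by field.
have E2 : \sum_q gamma q * \sum_i S q i * v i = \sum_i D i * v i.
  under eq_bigr do rewrite mulr_sumr.
  rewrite exchange_big; apply: eq_bigr => i _; rewrite -hmix mulr_suml.
  by apply: eq_bigr => q' _; rewrite mulrA.
have E3 : forall x, G v D x = \sum_q gamma q * G v (S q) x.
  move=> x; rewrite /G; under eq_bigr do rewrite -hmix.
  rewrite exchange_big /=; apply: eq_bigr => q' _; by rewrite mulr_sumr.
have E4 : p0 * G v D p0 = p * G v D p.
  by apply/eqP; rewrite eq_le hp0.2 ?hp.1 // hp.2 ?hp0.1.
have H1 : \sum_q gamma q * M q <= p * G v D p.
  have : \sum_q gamma q * (CS q + M q) <= \sum_q gamma q * \sum_i S q i * v i.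
    by apply: ler_sum => q' _; apply: ler_wpM2l; [exact: hg | exact: CSle].
  rewrite E2; under eq_bigr do rewrite mulrDr.
  rewrite big_split /= -E1 hbo E4.
  lra.
have H2 : \sum_q gamma q * (M q - p * G v (S q) p) = 0.
  apply/eqP; rewrite eq_le; apply/andP; split.
    under eq_bigr do rewrite mulrBr.
    rewrite sumrB.
    have -> : \sum_q gamma q * (p * G v (S q) p) = p * G v D p.
      rewrite E3 mulr_sumr; apply: eq_bigr => q' _; ring.
    lra.
  apply: sumr_ge0 => q' _; apply: mulr_ge0; first exact: hg.
  by rewrite subr_ge0; apply: Mopt; exact: hp.1.
have hnn : forall q', true -> 0 <= gamma q' * (M q' - p * G v (S q') p).
  move=> q' _; apply: mulr_ge0; first exact: hg.
  by rewrite subr_ge0; apply: Mopt; exact: hp.1.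
have := psumr_eq0P hnn H2 (i:=q) isT.
move/eqP; rewrite mulf_eq0 (gt_eqF hq) /= subr_eq0 => /eqP hM.
  split; first exact: hp.1.
move=> p' hp'; rewrite -hM; exact: Mopt.
Qed.
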